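(* Let $f$ be a $\mathbf{\Sigma}$-piecewise linear function on $N_{\mathbb{R}}$ and $\mathcal L=\sum_{i=1}^n f(v_i)E_i\in\mathrm{Pic}_{\mathbb{R}}(\mathbb{P}_{\mathbf{\Sigma}})$. Let $s\in\{1,\dots,n\}$. Then there exists a $\mathbf{\Sigma}$-piecewise linear function $g$ on $N_{\mathbb{R}}$ such that: (i) $\mathcal L=\sum_{i=1}^n g(v_i)E_i$ in $\mathrm{Pic}_{\mathbb{R}}(\mathbb{P}_{\mathbf{\Sigma}})$; (ii) $g(v_s)=0$; (iii) $g(v_i)\ne0$ for every $i$ with $v_i\notin\mathbb{R}v_s$; (iv) if $t\ne s$ and $v_t\in\mathbb{R}v_s$, then $g(v_t)=0$ if and only if the restriction of $f$ to the line $\mathbb{R}v_s$ is linear.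
   Context: $N$ is a lattice of rank $m$, $M=\mathrm{Hom}(N,\mathbb{Z})$, $N_{\mathbb{R}}=N\otimes\mathbb{R}$, $M_{\mathbb{R}}=M\otimes\mathbb{R}$; $\Sigma$ is a complete simplicial fan in $N_{\mathbb{R}}$ with $n$ rays and $v_i\in N$ a nonzero lattice point on the $i$-th ray ($\mathbf{\Sigma}=(\Sigma,\{v_i\})$), with associated toric DM stack $\mathbb{P}_{\mathbf{\Sigma}}$. $\mathrm{Pic}_{\mathbb{R}}(\mathbb{P}_{\mathbf{\Sigma}})=\mathrm{Pic}(\mathbb{P}_{\mathbf{\Sigma}})\otimes\mathbb{R}$ is identified with $\mathbb{R}^n/\{\sum_i w(v_i)E_i:w\in M_{\mathbb{R}}\}$, where $E_1,\dots,E_n$ is the standard basis of $\mathbb{R}^n$. A $\mathbf{\Sigma}$-piecewise linear function is a continuous function $N_{\mathbb{R}}\to\mathbb{R}$ whose restriction to each cone of $\Sigma$ is linear. *)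

(* Defs.v *)
(* N = Z^m, N_R = 'rV[R]_m, M_R = 'cV[R]_m (pairing x *m w). *)
From HB Require Import structures.
From mathcomp Require Import all_boot all_order all_algebra.
Set Implicit Arguments. Unset Strict Implicit. Unset Printing Implicit Defensive.
Import Order.TTheory GRing.Theory Num.Theory.
Local Open Scope ring_scope.

Section Fans.
Variables (R : realFieldType) (m n : nat).

Definition in_cone (v : 'I_n -> 'rV[R]_m) (sigma : {set 'I_n}) (x : 'rV[R]_m) : Prop :=
  exists c : 'I_n -> R,
    (forall i, 0 <= c i) /\ (forall i, i \notin sigma -> c i = 0) /\
    x = \sum_i c i *: v i.

Definition lin_indep_on (v : 'I_n -> 'rV[R]_m) (sigma : {set 'I_n}) : Prop :=
  forall c : 'I_n -> R, \sum_(i in sigma) c i *: v i = 0 ->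
    forall i, i \in sigma -> c i = 0.

Definition lattice_point (x : 'rV[R]_m) : Prop :=
  exists z : 'I_m -> int, x = \row_j (z j)%:~R.

(* (Sigma, {v_i}) : a complete simplicial fan whose cones are indexed by the
   sets of their rays; the i-th ray is generated by the nonzero lattice
   point v i. *)
Record complete_simplicial_fan (v : 'I_n -> 'rV[R]_m) (Sigma : {set {set 'I_n}}) : Prop := {
  fan_nonzero : forall i, v i != 0;
  fan_lattice : forall i, lattice_point (v i);
  fan_simplicial : forall sigma, sigma \in Sigma -> lin_indep_on v sigma;
  fan_faces : forall sigma tau : {set 'I_n}, sigma \in Sigma -> tau \subset sigma -> tau \in Sigma;
  fan_inter : forall (sigma tau : {set 'I_n}) x, sigma \in Sigma -> tau \in Sigma ->
      in_cone v sigma x -> in_cone v tau x -> in_cone v (sigma :&: tau) x;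
  fan_rays : forall i, [set i] \in Sigma;
  fan_complete : forall x, exists2 sigma, sigma \in Sigma & in_cone v sigma x
}.

Definition piecewise_linear (v : 'I_n -> 'rV[R]_m) (Sigma : {set {set 'I_n}})
    (f : 'rV[R]_m -> R) : Prop :=
  forall sigma, sigma \in Sigma ->
    exists w : 'cV[R]_m, forall x, in_cone v sigma x -> f x = (x *m w) 0 0.

(* equality in Pic_R = R^n / {(w(v_i))_i : w in M_R} *)
Definition pic_eq (v : 'I_n -> 'rV[R]_m) (a b : 'I_n -> R) : Prop :=
  exists w : 'cV[R]_m, forall i, a i - b i = (v i *m w) 0 0.

Definition on_line (x y : 'rV[R]_m) : Prop := exists c : R, y = c *: x.

Definition linear_on_line (f : 'rV[R]_m -> R) (x : 'rV[R]_m) : Prop :=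
  exists a : R, forall t : R, f (t *: x) = t * a.

End Fans.

(* Main.v *)
Require Import Defs.
From HB Require Import structures.
From mathcomp Require Import all_boot all_order all_algebra.
From Stdlib Require Import Classical.
Import Order.TTheory GRing.Theory Num.Theory.
Local Open Scope ring_scope.

Section Aux.
Variables (R : realFieldType) (m : nat).

Lemma entry_mulD (x : 'rV[R]_m) (w u : 'cV[R]_m) (mu : R) :
  (x *m (w + mu *: u)) 0 0 = (x *m w) 0 0 + mu * (x *m u) 0 0.
Proof. by rewrite mulmxDr -scalemxAr !mxE. Qed.

Lemma exists_sep (a b : 'rV[R]_m) : (forall c : R, b <> c *: a) ->
  exists u : 'cV[R]_m, (a *m u) 0 0 = 0 /\ (b *m u) 0 0 <> 0.
Proof.
move=> Hb.
have Hnsub : ~~ (b <= a)%MS.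
  apply/negP => /submxP [D HD]; apply: (Hb (D 0 0)).
  rewrite HD; apply/matrixP => i j; rewrite !mxE big_ord1 !ord1 //.
move: Hnsub; rewrite submxE => Hnz.
have [j Hj] : exists j, (b *m cokermx a) 0 j != 0.
  apply NNPP => Hn; move/negP: Hnz; apply; apply/eqP/matrixP => i j.
  rewrite ord1 [X in _ = X]mxE; apply/eqP; apply: negbNE; apply/negP => Hj; apply: Hn.
  by exists j.
exists (cokermx a *m delta_mx j 0); split.
  by rewrite mulmxA -colE mulmx_coker !mxE.
by rewrite mulmxA -colE mxE; apply/eqP.
Qed.

Lemma avoid_vals (l : seq R) : exists mu : R, mu != 0 /\ mu \notin l.
Proof.
exists (1 + \sum_(x <- l) `|x|); split.
  by rewrite gt_eqF // ltr_pwDl // sumr_ge0.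
apply/negP => Hin.
have : `|1 + \sum_(x <- l) `|x| | <= \sum_(x <- l) `|x|.
  rewrite [X in _ <= X](big_rem _ Hin) /= lerDl.
  by apply: sumr_ge0 => x _; apply: normr_ge0.
rewrite ger0_norm ?addr_ge0 ?sumr_ge0 // -{2}(add0r (\sum_(_ <- _) _)).
by rewrite lerD2r ler10.
Qed.

Lemma find_w (a : 'rV[R]_m) (c : R) (w0 : 'cV[R]_m) (Hw0 : (a *m w0) 0 0 = c)
  (I : eqType) (vv : I -> 'rV[R]_m) (ff : I -> R) (l : seq I) :
  exists w : 'cV[R]_m, (a *m w) 0 0 = c /\
    forall i, i \in l -> (forall k : R, vv i <> k *: a) -> (vv i *m w) 0 0 <> ff i.
Proof.
elim: l => [|k l [w1 [Hw1 Hl]]]; first by exists w0.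
case: (classic ((forall c0 : R, vv k <> c0 *: a) /\ (vv k *m w1) 0 0 = ff k)); last first.
  move=> Hn; exists w1; split => // i; rewrite in_cons => /orP [/eqP -> Hk E|]; last by apply: Hl.
  by apply: Hn.
move=> [Hk Ek].
have [u [Hu1 Hu2]] := exists_sep _ _ Hk.
have [mu [Hmu0 Hmul]] := avoid_vals
  [seq (ff i - (vv i *m w1) 0 0) / (vv i *m u) 0 0 | i <- l].
exists (w1 + mu *: u); split.
  by rewrite entry_mulD Hu1 mulr0 addr0.
move=> i; rewrite in_cons => /orP [/eqP -> _|Hi Hni]; rewrite entry_mulD.
  rewrite Ek => /eqP; rewrite -subr_eq0 addrC addKr mulf_eq0 => /orP [].
    by rewrite (negbTE Hmu0).
  by move/eqP.
move=> E.
have Hi1 := Hl i Hi Hni.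
have Hnz : (vv i *m u) 0 0 != 0.
  apply/negP => /eqP Z; apply: Hi1; by rewrite -E Z mulr0 addr0.
move/negP: Hmul; apply; apply/mapP; exists i => //.
by rewrite -E addrC addKr mulfK.
Qed.

End Aux.

Theorem lemma4p1 (R : realFieldType) (m n : nat) (v : 'I_n -> 'rV[R]_m)
    (Sigma : {set {set 'I_n}}) (HSigma : complete_simplicial_fan v Sigma)
    (f : 'rV[R]_m -> R) (Hf : piecewise_linear v Sigma f) (s : 'I_n) :
  exists g : 'rV[R]_m -> R,
    [/\ piecewise_linear v Sigma g,
        pic_eq v (fun i => f (v i)) (fun i => g (v i)),
        g (v s) = 0,
        (forall i, ~ on_line (v s) (v i) -> g (v i) <> 0) &
        (forall t, t != s -> on_line (v s) (v t) ->
           (g (v t) = 0 <-> linear_on_line f (v s)))].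
Proof.
have Hray : forall i (t : R), 0 <= t -> in_cone v [set i] (t *: v i).
  move=> i t ht; exists (fun k => if k == i then t else 0); split; [|split].
  - by move=> k; case: (k == i).
  - by move=> k; rewrite in_set1 => /negbTE ->.
  - rewrite (bigD1 i) //= eqxx big1 ?addr0 // => k /negbTE ->; exact: scale0r.
have Hrl : forall i (t : R), 0 <= t -> f (t *: v i) = t * f (v i).
  move=> i t ht; have [w' Hw'] := Hf _ (fan_rays HSigma i).
  rewrite (Hw' _ (Hray i t ht)) -{2}(scale1r (v i)) (Hw' _ (Hray i 1 ler01)).
  by rewrite -!scalemxAl !mxE mul1r.
have [j Hj] : exists j, v s 0 j != 0.
  apply NNPP => Hn; move/negP: (fan_nonzero HSigma s); apply; apply/eqP/matrixP => i j.
  rewrite ord1 [X in _ = X]mxE; apply/eqP; apply: negbNE; apply/negP => Hj; apply: Hn.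
  by exists j.
have Hw0 : (v s *m ((f (v s) / v s 0 j) *: (delta_mx j (0 : 'I_1) : 'cV[R]_m))) 0 0 = f (v s).
  by rewrite -scalemxAr -colE !mxE divfK.
have [w [Hws Hwi]] := @find_w R m (v s) (f (v s)) _ Hw0 _ v (fun i => f (v i)) (enum 'I_n).
exists (fun x => f x - (x *m w) 0 0); split.
- move=> sigma Hs; have [w' Hw'] := Hf _ Hs; exists (w' - w) => x Hx.
  rewrite (Hw' _ Hx) mulmxBr; set A := x *m w'; set B := x *m w; by rewrite !mxE.
- by exists w => i; rewrite opprB addrC subrK.
- by rewrite Hws subrr.
- move=> i Hi /eqP; rewrite subr_eq0 => /eqP E; apply: (Hwi i) => //.
  + by rewrite mem_enum.
  + by move=> k Hk; apply: Hi; exists k.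
- move=> t Hts [c Hc].
  have Hc0 : c != 0.
    apply/negP => /eqP Z; move/negP: (fan_nonzero HSigma t); apply.
    by rewrite Hc Z scale0r.
  have Hcneg : c < 0.
    rewrite ltNge; apply/negP => Hcpos.
    have H1 : in_cone v [set s] (v t) by rewrite Hc; exact: Hray.
    have H2 : in_cone v [set t] (v t) by rewrite -{1}(scale1r (v t)); exact: Hray.
    have [c' [_ [Hc'0 Hsum]]] := fan_inter HSigma (fan_rays HSigma s) (fan_rays HSigma t) H1 H2.
    move/negP: (fan_nonzero HSigma t); apply; apply/eqP; rewrite Hsum big1 // => k _.
    rewrite Hc'0 ?scale0r // in_setI !in_set1; apply/negP => /andP [/eqP -> /eqP E].
    by move/negP: Hts; apply; rewrite E.
  have Egt : (v t *m w) 0 0 = c * f (v s) by rewrite Hc -scalemxAl mxE Hws.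
  rewrite Egt; split.
  + move=> /eqP; rewrite subr_eq0 => /eqP E; exists (f (v s)) => x.
    case: (lerP 0 x) => hx; first exact: Hrl.
    have -> : x *: v s = (x / c) *: v t.
      by rewrite Hc scalerA divfK.
    rewrite Hrl; last first.
      by rewrite -mulrNN -invrN; apply: ltW; apply: divr_gt0; rewrite oppr_gt0.
    by rewrite E mulrA divfK.
  + move=> [a Ha]; have := Ha 1; rewrite scale1r mul1r => ->.
    by rewrite Hc Ha subrr.
Qed.
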